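(* Let $n\geq 2$, $k>0$, $m=\lfloor n/2\rfloor$, and $a\in\mathbb{C}^{2^m}$. Let $\phi'_{a,0}$ be the Killing spinor on $(\mathbb{H}^n_{-k^2},g')$ corresponding to $a$ (described in the context). Then at every point $X\in\mathbb{H}^n_{-k^2}\subset\mathbb{R}^{n,1}$, $$|\phi'_{a,0}|^2_{g'}=-2k\,X\cdot\zeta_a,$$ where $$\zeta_a=\sum_{j=1}^n\langle\sqrt{-1}\,c(e_j)a,a\rangle e_j-\langle\sqrt{-1}\,c(e_0)a,a\rangle e_0=\sum_{j=1}^n\langle\sqrt{-1}\,c(e_j)a,a\rangle e_j+|a|^2e_0 .$$
   Context: $\mathbb{R}^{n,1}$ is Minkowski space with orthonormal basis $e_1=\partial/\partial x_1,\dots,e_n=\partial/\partial x_n$, $e_0=\partial/\partial t$, metric $\sum dx_i^2-dt^2$ and Lorentz inner product ''$\cdot$''. $\mathbb{H}^n_{-k^2}=\{X=(x_1,\dots,x_n,t):\sum x_i^2-t^2=-1/k^2,\ t>0\}$ with induced metric $g'$. $\langle\cdot,\cdot\rangle$ is the standard Hermitian inner product on $\mathbb{C}^{2^m}$, $c(e_j)$ ($1\le j\le n$) are Baum's Clifford matrices (complex $2^m\times2^m$ matrices with $c(e_i)c(e_j)+c(e_j)c(e_i)=-2\delta_{ij}I$, built from $g_1=\begin{pmatrix}\sqrt{-1}&0\\0&-\sqrt{-1}\end{pmatrix}$, $g_2=\begin{pmatrix}0&\sqrt{-1}\\\sqrt{-1}&0\end{pmatrix}$, $T=\begin{pmatrix}0&-\sqrt{-1}\\\sqrt{-1}&0\end{pmatrix}$,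 $E=I_2$ by $c(e_{2j-1})=E\otimes\cdots\otimes E\otimes g_1\otimes T\otimes\cdots\otimes T$, $c(e_{2j})=E\otimes\cdots\otimes E\otimes g_2\otimes T\otimes\cdots\otimes T$ ($j-1$ factors $E$, $m$ factors total), and, if $n=2m+1$, $c(e_n)=\sqrt{-1}\,T\otimes\cdots\otimes T$), and $c(e_0):=\sqrt{-1}I$. A Killing spinor is a spinor field $\phi'$ with $\nabla'_V\phi'+\frac{\sqrt{-1}}{2}k\,c'(V)\phi'=0$ for all $V$, $\nabla'$ the spin connection and $c'$ Clifford multiplication of $g'$. By Baum, the Killing spinors are parametrized by $a\in\mathbb{C}^{2^m}$: in the ball model $x\in\{|x|<1/k\}\subset\mathbb{R}^n$ with metric $4|dx|^2/(1-k^2|x|^2)^2$, identified with the hyperboloid via $X=\big(\tfrac{2x}{1-k^2|x|^2},\tfrac{1+k^2|x|^2}{k(1-k^2|x|^2)}\big)$, and with the spinor bundle trivialized, $\phi'_{a,0}(x)=\sqrt{\tfrac{2}{1-k^2|x|^2}}\big(a-\sqrt{-1}\,k\,c(x)a\big)$, where $c(x)=\sum_j x_jc(e_j)$ (for $k=1$ this is Baum's formula $\sqrt{2/(1-|x|^2)}(a-\sqrt{-1}c(x)a)$). *)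

(* Defs.v *)
From HB Require Import structures.
From mathcomp Require Import all_boot all_order all_algebra.
From mathcomp Require Export complex.
Set Implicit Arguments. Unset Strict Implicit. Unset Printing Implicit Defensive.
Import Order.TTheory GRing.Theory Num.Theory.
Local Open Scope ring_scope.
Local Open Scope complex_scope.

Section Baum.
Variable R : rcfType.
Local Notation C := R[i].

(* 2x2 building blocks of Baum's Clifford matrices *)
Definition g1 : 'M[C]_2 := \matrix_(r, s)
  (if (r == 0) && (s == 0) then 'i else if (r == 1) && (s == 1) then - 'i else 0).
Definition g2 : 'M[C]_2 := \matrix_(r, s) (if r != s then 'i else 0).
Definition Tm : 'M[C]_2 := \matrix_(r, s)
  (if (r == 0) && (s == 1) then - 'i else if (r == 1) && (s == 0) then 'i else 0).
Definition Em : 'M[C]_2 := 1%:M.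

(* l-th binary digit (l = 0 is the most significant one) of an index i < 2^m;
   this is the index of the l-th tensor factor. *)
Definition kbit (m i l : nat) : 'I_2 := inord (odd (i %/ 2 ^ (m - l.+1))).

(* Kronecker product F 0 (x) F 1 (x) ... (x) F (m-1) of m 2x2 matrices, written
   out entrywise. *)
Definition kron (m : nat) (F : nat -> 'M[C]_2) : 'M[C]_(2 ^ m) :=
  \matrix_(i, j) \prod_(l < m) F l (kbit m i l) (kbit m j l).

(* Baum's Clifford matrix c(e_{p+1}) for p : 'I_n, of size 2^m, m = n/2. *)
Definition cliff (n : nat) (p : 'I_n) : 'M[C]_(2 ^ n./2) :=
  let m := n./2 in
  if (p : nat) == m.*2 then (* only possible when n = 2m+1 odd and p+1 = n *)
    'i *: kron m (fun _ => Tm)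
  else
    kron m (fun l => if (l < p./2)%N then Em
                     else if l == p./2 then (if odd p then g2 else g1)
                     else Tm).

Definition cliff0 (n : nat) : 'M[C]_(2 ^ n./2) := 'i%:M.

Definition cliffx (n : nat) (x : 'rV[R]_n) : 'M[C]_(2 ^ n./2) :=
  \sum_(p < n) (x 0 p)%:C *: cliff p.

Definition herm (N : nat) (u v : 'cV[C]_N) : C := \sum_(r < N) u r 0 * (v r 0)^*.

Definition sqnorm (n : nat) (x : 'rV[R]_n) : R := \sum_(p < n) x 0 p ^+ 2.

(* Minkowski vectors of R^{n,1} with complex coefficients:
   (spatial components along e_1..e_n, component along e_0) *)
Definition mink (n : nat) := ('rV[C]_n * C)%type.

Definition lorentz (n : nat) (X Y : mink n) : C :=
  \sum_(p < n) X.1 0 p * Y.1 0 p - X.2 * Y.2.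

(* identification of the ball model {|x| < 1/k} with the hyperboloid *)
Definition hyp_of_ball (n : nat) (k : R) (x : 'rV[R]_n) : mink n :=
  let d := 1 - k ^+ 2 * sqnorm x in
  (\row_p (2 * x 0 p / d)%:C, ((1 + k ^+ 2 * sqnorm x) / (k * d))%:C).

Definition zeta (n : nat) (a : 'cV[C]_(2 ^ n./2)) : mink n :=
  (\row_p herm ('i *: (cliff p *m a)) a, - herm ('i *: (cliff0 n *m a)) a).

(* Killing spinor phi'_{a,0} in the ball model, trivialized *)
Definition killing (n : nat) (k : R) (a : 'cV[C]_(2 ^ n./2)) (x : 'rV[R]_n)
  : 'cV[C]_(2 ^ n./2) :=
  (Num.sqrt (2 / (1 - k ^+ 2 * sqnorm x)))%:C *:
    (a - ('i * k%:C) *: (cliffx x *m a)).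

End Baum.

(* Main.v *)
Require Import Defs.
From HB Require Import structures.
From mathcomp Require Import all_boot all_order all_algebra.
From mathcomp Require Import complex zify ring.
Import Order.TTheory GRing.Theory Num.Theory.
Set Implicit Arguments. Unset Strict Implicit. Unset Printing Implicit Defensive.
Local Open Scope ring_scope.
Local Open Scope complex_scope.

Lemma bits_inj m : forall r1 r2, (r1 < 2 ^ m)%N -> (r2 < 2 ^ m)%N ->
  (forall j, (j < m)%N -> odd (r1 %/ 2 ^ j) = odd (r2 %/ 2 ^ j)) -> r1 = r2.
Proof.
elim: m => [|m IH] r1 r2.
  by rewrite expn0 !ltnS !leqn0 => /eqP-> /eqP->.
move=> h1 h2 H.
rewrite -(odd_double_half r1) -(odd_double_half r2).
have := H 0%N erefl; rewrite expn0 !divn1 => ->.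
congr (_ + _.*2)%N.
apply: IH.
- by rewrite -divn2 ltn_divLR // -expnSr.
- by rewrite -divn2 ltn_divLR // -expnSr.
move=> j hj; rewrite -!divn2 -!divnMA -expnS; exact: H.
Qed.

Section S.
Variable R : rcfType.
Local Notation C := R[i].

Definition bitsf m (r : 'I_(2 ^ m)) : {ffun 'I_m -> 'I_2} :=
  [ffun l : 'I_m => kbit m r l].

Lemma bitsf_inj m : injective (@bitsf m).
Proof.
move=> r1 r2 /ffunP E; apply/val_inj/(@bits_inj m) => //=; last first.
move=> j hj; have hl : (m - j.+1 < m)%N by lia.
have /(congr1 val) := E (Ordinal hl).
rewrite !ffunE /kbit /= !inordK ?ltnS ?leq_b1 //.
have -> : (m - (m - j.+1).+1 = j)%N by lia.
by case: odd; case: odd.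
Qed.
End S.
Section K.
Variable R : rcfType.
Local Notation C := R[i].

Lemma bitsf_bij m : bijective (@bitsf m).
Proof. by apply: inj_card_bij; [exact: bitsf_inj|rewrite card_ffun !card_ord]. Qed.

Lemma kron_mul m (F G : nat -> 'M[C]_2) :
  kron m F *m kron m G = kron m (fun l => F l *m G l).
Proof.
apply/matrixP => i j; rewrite !mxE.
under [RHS]eq_bigr do rewrite mxE.
rewrite bigA_distr_bigA (reindex (@bitsf m)) /=; last exact/onW_bij/bitsf_bij.
apply: eq_bigr => r _; rewrite !mxE -big_split; apply: eq_bigr => l _.
by rewrite ffunE.
Qed.

Lemma eq_kron m (F G : nat -> 'M[C]_2) :
  (forall l, (l < m)%N -> F l = G l) -> kron m F = kron m G.
Proof.
move=> H; apply/matrixP => i j; rewrite !mxE; apply: eq_bigr => l _.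
by rewrite H.
Qed.

Lemma kronZ m (c : nat -> C) (F : nat -> 'M[C]_2) :
  kron m (fun l => c l *: F l) = (\prod_(l < m) c l) *: kron m F.
Proof.
apply/matrixP => i j; rewrite !mxE -big_split; apply: eq_bigr => l _.
by rewrite mxE.
Qed.

Lemma kron1 m : kron m (fun _ => (1%:M : 'M[C]_2)) = 1%:M.
Proof.
apply/matrixP => i j; rewrite !mxE.
case: (eqVneq i j) => [->|nij].
  by apply: big1 => l _; rewrite mxE eqxx.
have : bitsf i != bitsf j by apply: contra nij => /eqP /bitsf_inj ->.
move=> nb; have /existsP [l hl] : [exists l : 'I_m, kbit m i l != kbit m j l].
  apply: contraNT nb => /existsPn H.
  by apply/eqP/ffunP => l; rewrite !ffunE; apply/eqP; have := H l; rewrite negbK.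
by rewrite (bigD1 l) //= mxE (negbTE hl) mul0r.
Qed.

Definition sgn (L l : nat) : C := if l == L then -1 else 1.

Lemma prod_sgn m L : (L < m)%N -> \prod_(l < m) sgn L l = -1.
Proof.
move=> hL; rewrite (bigD1 (Ordinal hL)) //= /sgn eqxx big1 ?mulr1 //.
by move=> l /eqP nl; case: eqP => // E; case: nl; apply: val_inj.
Qed.

Lemma kron_sgn m L (F G : nat -> 'M[C]_2) : (L < m)%N ->
  (forall l, (l < m)%N -> F l = sgn L l *: G l) -> kron m F = - kron m G.
Proof.
by move=> hL H; rewrite (eq_kron H) kronZ prod_sgn // scaleN1r.
Qed.

Definition adj N M (A : 'M[C]_(N, M)) : 'M[C]_(M, N) := map_mx conjc A^T.

Lemma adj_kron m (F : nat -> 'M[C]_2) :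
  adj (kron m F) = kron m (fun l => adj (F l)).
Proof.
apply/matrixP => i j; rewrite !mxE rmorph_prod; apply: eq_bigr => l _.
by rewrite !mxE.
Qed.
End K.
Section M2.
Variable R : rcfType.
Local Notation C := R[i].


Lemma g1g1 : g1 R *m g1 R = - 1%:M.
Proof. by apply/matrixP=> - [[|[|//]] ?] [[|[|//]] ?]; rewrite !mxE ?big_ord_recr ?big_ord0 /= !mxE /=; simpc. Qed.
Lemma g2g2 : g2 R *m g2 R = - 1%:M.
Proof. by apply/matrixP=> - [[|[|//]] ?] [[|[|//]] ?]; rewrite !mxE ?big_ord_recr ?big_ord0 /= !mxE /=; simpc. Qed.
Lemma TT : Tm R *m Tm R = 1%:M.
Proof. by apply/matrixP=> - [[|[|//]] ?] [[|[|//]] ?]; rewrite !mxE ?big_ord_recr ?big_ord0 /= !mxE /=; simpc. Qed.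
Lemma g1g2 : g1 R *m g2 R = - (g2 R *m g1 R).
Proof. by apply/matrixP=> - [[|[|//]] ?] [[|[|//]] ?]; rewrite !mxE ?big_ord_recr ?big_ord0 /= !mxE /=; simpc. Qed.
Lemma g1T : g1 R *m Tm R = - (Tm R *m g1 R).
Proof. by apply/matrixP=> - [[|[|//]] ?] [[|[|//]] ?]; rewrite !mxE ?big_ord_recr ?big_ord0 /= !mxE /=; simpc. Qed.
Lemma g2T : g2 R *m Tm R = - (Tm R *m g2 R).
Proof. by apply/matrixP=> - [[|[|//]] ?] [[|[|//]] ?]; rewrite !mxE ?big_ord_recr ?big_ord0 /= !mxE /=; simpc. Qed.
Lemma adj_g1 : adj (g1 R) = - g1 R.
Proof. by apply/matrixP=> - [[|[|//]] ?] [[|[|//]] ?]; rewrite !mxE /=; simpc. Qed.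
Lemma adj_g2 : adj (g2 R) = - g2 R.
Proof. by apply/matrixP=> - [[|[|//]] ?] [[|[|//]] ?]; rewrite !mxE /=; simpc. Qed.
Lemma adj_T : adj (Tm R) = Tm R.
Proof. by apply/matrixP=> - [[|[|//]] ?] [[|[|//]] ?]; rewrite !mxE /=; simpc. Qed.
Lemma adj_E : adj (Em R) = Em R.
Proof. by apply/matrixP=> - [[|[|//]] ?] [[|[|//]] ?]; rewrite !mxE /=; simpc. Qed.
End M2.
Section Cl.
Variable R : rcfType.
Local Notation C := R[i].

Definition Fp (p l : nat) : 'M[C]_2 :=
  if (l < p./2)%N then Em R else if l == p./2 then (if odd p then g2 R else g1 R)
  else Tm R.

Lemma cliff_ns n (p : 'I_n) : (p : nat) != (n./2).*2 ->
  cliff R p = kron (n./2) (Fp p).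
Proof. by move=> h; rewrite /cliff (negbTE h). Qed.

Lemma cliff_s n (p : 'I_n) : (p : nat) == (n./2).*2 ->
  cliff R p = 'i *: kron (n./2) (fun _ => Tm R).
Proof. by move=> h; rewrite /cliff h. Qed.

Lemma ns_lt n (p : 'I_n) : (p : nat) != (n./2).*2 -> (p./2 < n./2)%N.
Proof.
move=> h; have hp := ltn_ord p.
have e1 := odd_double_half p; have e2 := odd_double_half n.
have o1 : (odd p <= 1)%N by case: odd.
have o2 : (odd n <= 1)%N by case: odd.
move/eqP: h => h; lia.
Qed.

Lemma adjZ N M (c : C) (A : 'M[C]_(N, M)) : adj (c *: A) = conjc c *: adj A.
Proof. by apply/matrixP => i j; rewrite !mxE rmorphM. Qed.

Lemma adj_cliff n (p : 'I_n) : adj (cliff R p) = - cliff R p.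
Proof.
case: (boolP ((p : nat) == (n./2).*2)) => h.
  rewrite cliff_s // adjZ adj_kron (@eq_kron _ _ _ (fun _ => Tm R)); last by move=> *; exact: adj_T.
  by rewrite -scaleNr; congr (_ *: _); simpc.
rewrite cliff_ns // adj_kron; apply: (kron_sgn (L := p./2)); first exact: ns_lt.
move=> l _; rewrite /Fp /sgn; case: ltngtP => hl.
- by rewrite adj_E scale1r.
- by rewrite adj_T scale1r.
- by rewrite ?eqxx; case: odd; rewrite ?adj_g1 ?adj_g2 scaleN1r.
Qed.

Lemma EmE : Em R = 1%:M. Proof. by []. Qed.

Lemma Fp_sq p l : (Fp p l *m Fp p l) = sgn R (p./2) l *: 1%:M.
Proof.
rewrite /Fp /sgn; case: ltngtP => hl.
- by rewrite EmE mul1mx scale1r.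
- by rewrite TT scale1r.
- by rewrite ?eqxx scaleN1r; case: odd; rewrite ?g1g1 ?g2g2.
Qed.

Lemma FpT p l : (Fp p l *m Tm R) = sgn R (p./2) l *: (Tm R *m Fp p l).
Proof.
rewrite /Fp /sgn; case: ltngtP => hl.
- by rewrite EmE mul1mx mulmx1 scale1r.
- by rewrite scale1r.
- by rewrite ?eqxx scaleN1r; case: odd; rewrite ?g1T ?g2T.
Qed.

Lemma Fp_pq p q l : (p < q)%N ->
  (Fp p l *m Fp q l) = sgn R (q./2) l *: (Fp q l *m Fp p l).
Proof.
move=> hpq; have hPQ : (p./2 <= q./2)%N by apply: half_leq; exact: ltnW.
rewrite /Fp /sgn.
case: (ltngtP l q./2) => hlQ.
- rewrite scale1r; case: ltngtP => hlP.
  + by rewrite EmE ?mul1mx ?mulmx1.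
  + by rewrite EmE ?mul1mx ?mulmx1.
  + by rewrite EmE ?mul1mx ?mulmx1.
- have -> : (l < p./2)%N = false by apply/negbTE; rewrite -leqNgt; apply: ltnW; exact: leq_ltn_trans hPQ hlQ.
  have -> : (l == p./2) = false by apply/negbTE; rewrite neq_ltn (leq_ltn_trans hPQ hlQ) orbT.
  by rewrite scale1r.
- rewrite ?eqxx scaleN1r -hlQ in hPQ *.
  case: ltngtP => hlP; first by lia.
  + by case: odd; rewrite ?g1T ?g2T opprK.
  + have ep : odd p = false.
      have e1 := odd_double_half p; have e2 := odd_double_half q.
      have o1 : (odd p <= 1)%N by case: odd.
      have o2 : (odd q <= 1)%N by case: odd.
      case: (odd p) e1 o1 => //= e1 _; lia.
    have eq : odd q = true.
      have e1 := odd_double_half p; have e2 := odd_double_half q.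
      have o1 : (odd p <= 1)%N by case: odd.
      have o2 : (odd q <= 1)%N by case: odd.
      case: (odd q) e2 o2 => //= e2 _; lia.
    by rewrite ep eq g1g2.
Qed.
End Cl.
Section Cl2.
Variable R : rcfType.
Local Notation C := R[i].

Lemma cliff_sq n (p : 'I_n) : cliff R p *m cliff R p = - 1%:M.
Proof.
case: (boolP ((p : nat) == (n./2).*2)) => h.
  rewrite cliff_s // -scalemxAl -scalemxAr scalerA kron_mul.
  rewrite (@eq_kron _ _ _ (fun _ => 1%:M)); last by move=> *; exact: TT.
  rewrite kron1 (_ : 'i * 'i = -1); first by rewrite scaleN1r.
  by simpc.
rewrite cliff_ns // kron_mul -(kron1 R (n./2)); apply: (kron_sgn (L := p./2)).
  exact: ns_lt.
by move=> l _; rewrite Fp_sq.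
Qed.

Lemma cliff_anti_lt n (p q : 'I_n) : (p < q)%N ->
  cliff R p *m cliff R q = - (cliff R q *m cliff R p).
Proof.
move=> hpq.
have hp : (p : nat) != (n./2).*2.
  apply/negP => /eqP e; have := ltn_ord q; have e2 := odd_double_half n.
  have o2 : (odd n <= 1)%N by case: odd. lia.
rewrite (@cliff_ns R _ _ hp).
case: (boolP ((q : nat) == (n./2).*2)) => h.
  rewrite cliff_s // -scalemxAl -scalemxAr -scalerN; congr (_ *: _).
  rewrite !kron_mul; apply: (kron_sgn (L := p./2)); first exact: ns_lt.
  by move=> l _; rewrite FpT.
rewrite cliff_ns // !kron_mul; apply: (kron_sgn (L := q./2)); first exact: ns_lt.
by move=> l _; rewrite Fp_pq.
Qed.

Lemma cliff_anti n (p q : 'I_n) : p != q ->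
  cliff R p *m cliff R q = - (cliff R q *m cliff R p).
Proof.
rewrite neq_ltn => /orP [h|h]; first exact: cliff_anti_lt.
by rewrite (cliff_anti_lt h) opprK.
Qed.
End Cl2.
Section H.
Variable R : rcfType.
Local Notation C := R[i].

Lemma adjM N M P (A : 'M[C]_(N, M)) (B : 'M[C]_(M, P)) :
  adj (A *m B) = adj B *m adj A.
Proof. by rewrite /adj trmx_mul map_mxM. Qed.

Lemma adjK N M (A : 'M[C]_(N, M)) : adj (adj A) = A.
Proof. by apply/matrixP => i j; rewrite !mxE conjcK. Qed.

Lemma adjD N M (A B : 'M[C]_(N, M)) : adj (A + B) = adj A + adj B.
Proof. by apply/matrixP => i j; rewrite !mxE rmorphD. Qed.

Lemma adj0 N M : adj (0 : 'M[C]_(N, M)) = 0.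
Proof. by apply/matrixP => i j; rewrite !mxE rmorph0. Qed.

Lemma adjN N M (A : 'M[C]_(N, M)) : adj (- A) = - adj A.
Proof. by apply/matrixP => i j; rewrite !mxE rmorphN. Qed.

Lemma hermE N (u v : 'cV[C]_N) : herm u v = (adj v *m u) 0 0.
Proof. by rewrite /herm !mxE; apply: eq_bigr => r _; rewrite !mxE mulrC. Qed.

Lemma hermMl N M (A : 'M[C]_(N, M)) u v : herm (A *m u) v = herm u (adj A *m v).
Proof. by rewrite !hermE adjM adjK mulmxA. Qed.

Lemma hermZl N (c : C) (u v : 'cV[C]_N) : herm (c *: u) v = c * herm u v.
Proof. by rewrite /herm mulr_sumr; apply: eq_bigr => r _; rewrite mxE mulrA. Qed.

Lemma hermZr N (c : C) (u v : 'cV[C]_N) : herm u (c *: v) = conjc c * herm u v.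
Proof.
by rewrite /herm mulr_sumr; apply: eq_bigr => r _; rewrite mxE rmorphM mulrCA.
Qed.

Lemma hermDl N (u u' v : 'cV[C]_N) : herm (u + u') v = herm u v + herm u' v.
Proof. by rewrite /herm -big_split; apply: eq_bigr => r _; rewrite mxE mulrDl. Qed.

Lemma hermDr N (u v v' : 'cV[C]_N) : herm u (v + v') = herm u v + herm u v'.
Proof.
by rewrite /herm -big_split; apply: eq_bigr => r _; rewrite mxE rmorphD mulrDr.
Qed.

Lemma hermNl N (u v : 'cV[C]_N) : herm (- u) v = - herm u v.
Proof. by rewrite -scaleN1r hermZl mulN1r. Qed.

Lemma hermNr N (u v : 'cV[C]_N) : herm u (- v) = - herm u v.
Proof.
by rewrite /herm -sumrN; apply: eq_bigr => r _; rewrite mxE rmorphN mulrN.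
Qed.

Lemma hermSuml N n (F : 'I_n -> 'cV[C]_N) v :
  herm (\sum_(p < n) F p) v = \sum_(p < n) herm (F p) v.
Proof.
elim/big_rec2: _ => [|p s t _ <-]; last by rewrite hermDl.
by rewrite /herm big1 // => r _; rewrite mxE mul0r.
Qed.

Lemma adj_sum N n (F : 'I_n -> 'M[C]_N) :
  adj (\sum_(p < n) F p) = \sum_(p < n) adj (F p).
Proof.
elim/big_rec2: _ => [|p s t _ <-]; first exact: adj0.
by rewrite adjD.
Qed.

Lemma adj_cliffx n (x : 'rV[R]_n) : adj (cliffx x) = - cliffx x.
Proof.
rewrite /cliffx adj_sum -sumrN; apply: eq_bigr => p _.
rewrite adjZ adj_cliff scalerN; by rewrite conjc_real.
Qed.

Lemma cliffx_sq n (x : 'rV[R]_n) :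
  cliffx x *m cliffx x = - ((sqnorm x)%:C *: 1%:M).
Proof.
set f := fun p q : 'I_n => ((x 0 p)%:C * (x 0 q)%:C) *: (cliff R p *m cliff R q).
have E : cliffx x *m cliffx x = \sum_p \sum_q f p q.
  rewrite /cliffx mulmx_suml; apply: eq_bigr => p _.
  rewrite mulmx_sumr; apply: eq_bigr => q _.
  by rewrite /f -scalemxAl -scalemxAr scalerA.
pose T := \sum_(p < n) \sum_(q < n) (if q != p then f p q else 0 : 'M[C]_(2 ^ n./2)).
have hT : T = - T.
  rewrite {1}/T exchange_big /= /T -sumrN; apply: eq_bigr => p _.
  rewrite -sumrN; apply: eq_bigr => q _.
  case: eqVneq => [->|hqp]; first by rewrite ?eqxx oppr0.
  rewrite /= /f cliff_anti; last by rewrite eq_sym.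
  by rewrite scalerN mulrC.
have T0 : T = 0.
  have : T *+ 2 = 0 by rewrite mulr2n {1}hT addNr.
  by rewrite -scaler_nat => /eqP; rewrite scaler_eq0 pnatr_eq0 /= => /eqP.
rewrite E.
have -> : \sum_p \sum_q f p q = \sum_p (f p p + \sum_q (if q != p then f p q else 0)).
  apply: eq_bigr => p _; rewrite (bigD1 p) //=; congr (_ + _).
  by rewrite big_mkcond; apply: eq_bigr => q _; case: ifP.
rewrite big_split /= -/T T0 addr0 /f /sqnorm rmorph_sum scaler_suml -sumrN.
apply: eq_bigr => p _; rewrite cliff_sq scalerN -rmorphM expr2.
by rewrite -scalemx1.
Qed.
End H.
Local Notation NI := (@Num.imaginary _).
Theorem proposition2p3 (R : rcfType) (n : nat) (k : R)
  (a : 'cV[R[i]]_(2 ^ n./2)) (x : 'rV[R]_n) :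
  (2 <= n)%N -> 0 < k -> k ^+ 2 * sqnorm x < 1 ->
  herm (killing k a x) (killing k a x) =
    - (2 * k)%:C * lorentz (hyp_of_ball k x) (zeta a).
Proof.
move=> hn hk hd.
have d0 : 0 < 1 - k ^+ 2 * sqnorm x by rewrite subr_gt0.
set d := 1 - k ^+ 2 * sqnorm x in d0 *.
set M := cliffx x.
set H := herm (M *m a) a.
set h0 := herm a a.
have HE : H = \sum_(p < n) (x 0 p)%:C * herm (cliff R p *m a) a.
  rewrite /H /M /cliffx mulmx_suml hermSuml; apply: eq_bigr => p _.
  by rewrite -scalemxAl hermZl.
have hA : herm a (M *m a) = - H.
  by rewrite -{1}(adjK M) -hermMl adj_cliffx mulNmx hermNl.
have hMM : herm (M *m a) (M *m a) = (sqnorm x)%:C * h0.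
  rewrite hermMl adj_cliffx mulNmx mulmxA cliffx_sq mulNmx opprK.
  by rewrite -scalemxAl mul1mx hermZr conjc_real.
have eI : Complex 0 1 = NI :> R[i] by [].
have hI : NI * NI = -1 :> R[i] by rewrite -eI; simpc.
have cI : conjc (NI * k%:C) = - (NI * k%:C).
  by rewrite -[k%:C]complexr0 -eI; simpc.
rewrite /killing -/d -/M.
set s := Num.sqrt (2 / d).
have hs : s%:C * s%:C = (2 / d)%:C.
  by rewrite -rmorphM -expr2 sqr_sqrtr // divr_ge0 // ltW.
rewrite hermZl hermZr conjc_real mulrA hs.
rewrite hermDl !hermDr !hermNl !hermNr !hermZl !hermZr hA hMM -/H -/h0 cI.
rewrite /lorentz /hyp_of_ball /zeta /= -/d.
under eq_bigr do rewrite !mxE hermZl.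
rewrite /cliff0 mul_scalar_mx !hermZl -/h0.
have z2 : - (NI * (NI * h0)) = h0 by rewrite mulrA hI mulN1r opprK.
rewrite z2.
have -> : \sum_(p < n) (2 * x 0 p / d)%:C * (NI * herm (cliff R p *m a) a)
    = (2 / d)%:C * NI * H.
  rewrite HE mulr_sumr; apply: eq_bigr => p _.
  rewrite (_ : 2 * x 0 p / d = 2 / d * x 0 p); last by rewrite mulrAC.
  rewrite rmorphM /=; ring.
have dC : d%:C != 0 by rewrite (inj_eq (@complexI _)) gt_eqF.
have kC : k%:C != 0 by rewrite (inj_eq (@complexI _)) gt_eqF.
have hw : forall Y, NI * k%:C * (- (NI * k%:C) * Y) = k%:C * k%:C * Y.
  by move=> Y; rewrite mulNr mulrN mulrA (mulrACA NI) hI mulN1r mulNr opprK.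
rewrite hw.
rewrite /d !(rmorphM, rmorphD, rmorphB, rmorphN, fmorphV, rmorphXn, rmorph1, rmorph_nat) /=.
rewrite /d !(rmorphM, rmorphD, rmorphB, rmorphN, fmorphV, rmorphXn, rmorph1, rmorph_nat) /= in dC.
field.
by apply/andP; split; [exact: dC | exact: kC].
Qed.
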